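(* Let $(X,\tau_X)$ be a locally compact space and $(Y,\mathcal{V})$ a Hausdorff uniform space. Equip $\mathcal{C}(X,Y)$, the set of continuous point-compact multifunctions from $X$ to $Y$, with the topology of uniform convergence $\tau_{uc}$. A subfamily $\mathcal{F}\subset\mathcal{C}(X,Y)$ is relatively $\tau_{uc}$-compact if and only if (AA1) $\mathcal{F}$ is pointwise relatively compact and equicontinuous, and (AA2) $\mathcal{F}$ satisfies the finite extension property.
   Context: A multifunction $f:X\to Y$ assigns to each $x$ a nonempty $f(x)\subset Y$; it is point-compact if each $f(x)$ is compact. For $V\subset Y\times Y$, $V[a]=\{w:(a,w)\in V\}$, $V[A]=\bigcup_{a\in A}V[a]$, $f(A)=\bigcup_{a\in A}f(a)$; entourages are taken symmetric. $f$ is upper semi-continuous if for each $x$ and open $W\supset f(x)$ there is an open $U_x\ni x$ with $f(U_x)\subset W$; lower semi-continuous if for each $x$ and open $W$ with $f(x)\cap W\neq\emptyset$ there is an open $U_x\ni x$ with $f(u)\cap W\neq\emptyset$ for all $u\in U_x$; continuous if both. For $V\in\mathcal{V}$ let $$V^{\dagger}=\{(f,g):\ \forall x\in X\ \forall y\in f(x)\ \forall z\in g(x):\ (\{y\}\times g(x))\cap V\neq\emptyset,\ (f(x)\times\{z\})\cap V\neq\emptyset\};$$ the sets $V^\dagger$ form a base of the uniformity of uniform convergence, which induces $\tau_{uc}$. The uniformity of pointwise convergence $\mathcal{W}_{pc}$ on $\mathcal{F}$ has subbase the sets defined like $V^\dagger$ but with the quantifier over $x$ replaced by a single fixed $x\in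 X$ (for $x\in X$, $V\in\mathcal{V}$). $\mathcal{F}$ is pointwise relatively compact if $\bigcup\{f(x):f\in\mathcal{F}\}$ is relatively compact in $Y$ for every $x\in X$. $\mathcal{F}$ is equicontinuous if for every $x\in X$ and $V\in\mathcal{V}$ there is an open $U_x\ni x$ such that for all $f\in\mathcal{F}$: $f(U_x)\subset V[f(x)]$, and $f(u)\cap V[y]\neq\emptyset$ for all $u\in U_x$, $y\in f(x)$. $\mathcal{F}$ satisfies the finite extension property if for every $V\in\mathcal{V}$ there is $W\in\mathcal{W}_{pc}$ (on $\mathcal{F}$) with $W\subset V^\dagger\cap(\mathcal{F}\times\mathcal{F})$. Relatively $\tau_{uc}$-compact means the $\tau_{uc}$-closure of $\mathcal{F}$ in $\mathcal{C}(X,Y)$ is compact. *)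

(* Defs.v *)
From HB Require Import structures.
From mathcomp Require Import all_boot all_order.
From mathcomp Require Import all_classical all_reals all_analysis.
From Stdlib Require Lists.List.

Set Implicit Arguments.
Unset Strict Implicit.
Unset Printing Implicit Defensive.

Local Open Scope classical_set_scope.

Section MultiFun.
Variables (X : topologicalType) (Y : uniformType).

Definition multifun := X -> set Y.

Definition sym_entourage (V : set (Y * Y)) : Prop :=
  entourage V /\ (forall a b, V (a, b) -> V (b, a)).

Definition ent_at (V : set (Y * Y)) (a : Y) : set Y := [set w | V (a, w)].

Definition ent_img (V : set (Y * Y)) (A : set Y) : set Y :=
  \bigcup_(a in A) ent_at V a.

Definition mimage (f : multifun) (A : set X) : set Y := \bigcup_(a in A) f a.

Definition point_compact (f : multifun) : Prop :=
  forall x, f x !=set0 /\ compact (f x).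

Definition usc (f : multifun) : Prop :=
  forall x (W : set Y), open W -> f x `<=` W ->
    exists U : set X, [/\ open U, U x & mimage f U `<=` W].

Definition lsc (f : multifun) : Prop :=
  forall x (W : set Y), open W -> f x `&` W !=set0 ->
    exists U : set X, [/\ open U, U x & forall u, U u -> f u `&` W !=set0].

Definition mcontinuous (f : multifun) : Prop := usc f /\ lsc f.

Definition CXY : set multifun := [set f | point_compact f /\ mcontinuous f].

Definition dagger_at (V : set (Y * Y)) (x : X) (f g : multifun) : Prop :=
  forall y z, f x y -> g x z ->
    (exists2 w, g x w & V (y, w)) /\ (exists2 w, f x w & V (w, z)).

Definition dagger (V : set (Y * Y)) : set (multifun * multifun) :=
  [set fg | forall x, dagger_at V x fg.1 fg.2].

(* tau_uc-open subsets of C(X,Y) (topology induced by the uniformity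
   whose base is the V^dagger, V symmetric entourage) *)
Definition uc_open (O : set multifun) : Prop :=
  O `<=` CXY /\
  forall f, O f -> exists V, sym_entourage V /\
    forall g, CXY g -> dagger V (f, g) -> O g.

Definition uc_closure (A : set multifun) : set multifun :=
  [set g | CXY g /\ forall O, uc_open O -> O g -> O `&` A !=set0].

Definition uc_compact (K : set multifun) : Prop :=
  K `<=` CXY /\
  forall (I : Type) (O : I -> set multifun), (forall i, uc_open (O i)) ->
    K `<=` \bigcup_i O i ->
    exists s : seq I, K `<=` \bigcup_(i in [set i | Stdlib.Lists.List.In i s]) O i.

Definition rel_uc_compact (F : set multifun) : Prop := uc_compact (uc_closure F).

Definition pointwise_rel_compact (F : set multifun) : Prop :=
  forall x, compact (closure (\bigcup_(f in F) f x)).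

Definition equicontinuous_mf (F : set multifun) : Prop :=
  forall x V, sym_entourage V ->
    exists U : set X, [/\ open U, U x &
      forall f, F f ->
        mimage f U `<=` ent_img V (f x) /\
        (forall u y, U u -> f x y -> f u `&` ent_at V y !=set0)].

(* The uniformity W_pc of pointwise convergence on F has subbase the
   sets {(f,g) | dagger_at V x f g}; a member of W_pc contains (on F x F)
   a finite intersection of subbase sets. *)
Definition finite_extension (F : set multifun) : Prop :=
  forall V, sym_entourage V ->
    exists s : seq (X * set (Y * Y)),
      (forall p, Stdlib.Lists.List.In p s -> sym_entourage p.2) /\
      forall f g, F f -> F g ->
        (forall p, Stdlib.Lists.List.In p s -> dagger_at p.2 p.1 f g) -> dagger V (f, g).

End MultiFun.

(* Main.v *)
Require Import Defs.
From mathcomp Require Import all_boot all_order.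
From mathcomp Require Import all_classical all_reals all_analysis.
From Stdlib Require Lists.List.
Set Implicit Arguments.
Unset Strict Implicit.
Unset Printing Implicit Defensive.
Local Open Scope classical_set_scope.

Notation LIn := Stdlib.Lists.List.In.

Section Gen.
Context {T : topologicalType}.

Definition covc (K : set T) := forall P : set T -> Prop,
  (forall k, K k -> exists Q, [/\ open Q, Q k & P Q]) ->
  exists s : seq (set T), (forall Q, LIn Q s -> open Q /\ P Q) /\
    forall k, K k -> exists2 Q, LIn Q s & Q k.

Lemma compact_covc K : compact K -> covc K.
Proof.
move=> cK P HP.
apply: contrapT => Hno.
pose D := [set s : seq (set T) | forall Q, LIn Q s -> open Q /\ P Q].
pose B := fun s : seq (set T) => K `\` [set k | exists2 Q, LIn Q s & Q k].
have FF : Filter (filter_from D B).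
  apply: filter_from_filter; first by exists [::] => Q [].
  move=> i j Di Dj; exists (i ++ j).
    by move=> Q HO; case: (Stdlib.Lists.List.in_app_or _ _ _ HO) => [/Di|/Dj].
  move=> k [Kk nk].
  split; split => //; case=> Q OI Ok; apply: nk; exists Q => //;
    apply: Stdlib.Lists.List.in_or_app; tauto.
have PF : ProperFilter (filter_from D B).
  apply: filter_from_proper => // s Ds.
  apply: contrapT => /set0P/negP; rewrite negbK => /eqP B0.
  apply: Hno; exists s; split => // k Kk.
  apply: contrapT => nk.
  have : B s k by split.
  by rewrite B0.
have [|p [Kp clp]] := cK _ PF.
  by exists [::] => // k [].

have [Q [oO Op PO]] := HP p Kp.
have DO : D [:: Q] by move=> Q' [<-|[]].
have := clp (B [:: Q]) Q.
case.
- by exists [:: Q].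
- by apply: open_nbhs_nbhs; split.
- move=> k [[_ nk] Ok]; apply: nk; exists Q => //; by left.
Qed.

Lemma list_filterI (F : set_system T) (I : Type) (s : seq I) (P : I -> T -> Prop) :
  Filter F -> (forall i, LIn i s -> F (P i)) -> F [set t | forall i, LIn i s -> P i t].
Proof.
move=> FF; elim: s => [|a s IH] H.
  by apply: filterS (filterT) => t _ i [].
have : F (P a `&` [set t | forall i, LIn i s -> P i t]).
  apply: filterI; first by apply: H; left.
  by apply: IH => i Hi; apply: H; right.
by apply: filterS => t [Pa Ps] i [<-|/Ps].
Qed.

Lemma covc_compact K : covc K -> compact K.
Proof.
move=> cK F PF FK.
apply: contrapT => /set0P/negP; rewrite negbK => /eqP K0.
have HP : forall k, K k -> exists Q, [/\ open Q, Q k &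
   exists2 G, F G & Q `&` G = set0].
  move=> k Kk.
  have nk : ~ cluster F k.
    by move=> ck; have : (K `&` cluster F) k by []; rewrite K0.
  move: nk => /existsNP [G /existsNP [N /not_implyP [FG /not_implyP [nN GN]]]].
  move: nN; rewrite nbhsE => -[Q [oO Ok] ON].
  exists Q; split => //; exists G => //.
  apply/seteqP; split => // t [Ot Gt]; apply: GN; exists t; split => //; exact: ON.
have [s [Hs cov]] := cK _ HP.
have : F (K `&` [set t | forall Q, LIn Q s -> ~ Q t]).
  apply: filterI => //; apply: list_filterI => Q /Hs [_ [G FG OG]].
  apply: filterS FG => t Gt Ot.
  by have : (Q `&` G) t by []; rewrite OG.
move=> /filter_ex [t [Kt nt]].
by have [Q OI Ot] := cov t Kt; apply: nt Ot.
Qed.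

End Gen.



Section Unif.
Context {Y : uniformType}.
Implicit Types V W : set (Y * Y).

Lemma symT : sym_entourage [set: Y * Y].
Proof. by split => //; exact: entourageT. Qed.

Lemma symI V W : sym_entourage V -> sym_entourage W -> sym_entourage (V `&` W).
Proof.
move=> [eV sV] [eW sW]; split; first exact: filterI.
by move=> a b [/sV ? /sW ?].
Qed.

Lemma sym_of_ent E : entourage E -> exists V, sym_entourage V /\ V `<=` E.
Proof.
move=> eE; exists (E `&` E^-1)%relation; split; last by move=> ? [].
split; first exact: entourage_invI.
by move=> a b [].
Qed.

Lemma sym_refl V y : sym_entourage V -> V (y, y).
Proof. by move=> [eV _]; exact: entourage_refl. Qed.

Lemma sym_split V : sym_entourage V -> exists W, sym_entourage W /\
  forall a b c, W (a, b) -> W (b, c) -> V (a, c).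
Proof.
move=> [eV sV].
have [W [sW WE]] := sym_of_ent (entourage_split_ent eV).
exists W; split => // a b c Wab Wbc.
by apply: (entourage_split b) => //; apply: WE.
Qed.

Lemma sym_split_sub V W : sym_entourage W ->
  (forall a b c, W (a, b) -> W (b, c) -> V (a, c)) -> W `<=` V.
Proof. by move=> sW H [a b] Wab; apply: (H a b b) => //; exact: sym_refl. Qed.

Lemma sym_split3 V : sym_entourage V -> exists W, sym_entourage W /\
  forall a b c d, W (a, b) -> W (b, c) -> W (c, d) -> V (a, d).
Proof.
move=> sV; have [W1 [sW1 H1]] := sym_split sV.
have [W2 [sW2 H2]] := sym_split sW1.
exists W2; split => // a b c d ab bc cd.
apply: (H1 a c d); first exact: (H2 a b c).
exact: (sym_split_sub sW2 H2).
Qed.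

Lemma sym_list (I : Type) (s : seq I) (Q : I -> set (Y * Y) -> Prop) :
  (forall i W W', Q i W -> W' `<=` W -> Q i W') ->
  (forall i, LIn i s -> exists W, sym_entourage W /\ Q i W) ->
  exists W, sym_entourage W /\ forall i, LIn i s -> Q i W.
Proof.
move=> Qm; elim: s => [|a s IH] H.
  by exists setT; split => //; exact: symT.
have [W1 [sW1 Q1]] := H a (or_introl erefl).
have [W2 [sW2 Q2]] := IH (fun i Hi => H i (or_intror Hi)).
exists (W1 `&` W2); split; first exact: symI.
move=> i [<-|Hi].
  by apply: Qm Q1 _ => ? [].
by apply: Qm (Q2 i Hi) _ => ? [].
Qed.

Lemma ent_at_nbhs V y : sym_entourage V -> nbhs y (ent_at V y).
Proof. by move=> [eV _]; apply/nbhsP; exists V => // z /xsectionP. Qed.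

Lemma ent_img_int V (B : set Y) : sym_entourage V ->
  B `<=` interior (ent_img V B).
Proof.
move=> sV b Bb; rewrite /interior /=.
apply: filterS (ent_at_nbhs b sV) => z Vz; by exists b.
Qed.

Lemma ent_at_int V (y : Y) : sym_entourage V -> interior (ent_at V y) y.
Proof. by move=> sV; exact: ent_at_nbhs. Qed.

Lemma nbhs_sym (y : Y) N : nbhs y N -> exists V, sym_entourage V /\ ent_at V y `<=` N.
Proof.
move=> /nbhsP [E eE EN].
have [V [sV VE]] := sym_of_ent eE.
by exists V; split => // z Vz; apply: EN; apply/xsectionP; apply: VE.
Qed.

Lemma compact_ent (K Q : set Y) : compact K -> open Q -> K `<=` Q ->
  exists V, sym_entourage V /\ ent_img V K `<=` Q.
Proof.
move=> cK oQ KQ.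
have := @compact_covc Y K cK
  (fun (N : set Y) => exists W : set (Y * Y), sym_entourage W /\ exists2 c : Y, N `<=` ent_at W c &
     forall a b, W (c, a) -> W (a, b) -> Q b).
case.
  move=> k Kk.
  have nQ : nbhs k Q by apply: open_nbhs_nbhs; split => //; exact: KQ.
  have [V [sV VQ]] := nbhs_sym nQ.
  have [W [sW WV]] := sym_split sV.
  exists (interior (ent_at W k)); split.
  - exact: open_interior.
  - exact: ent_at_int.
  - exists W; split => //; exists k; first exact: interior_subset.
    by move=> a b ka ab; apply: VQ; exact: (WV k a b).
move=> s [Hs cov].
pose QQ := fun (N : set Y) (W : set (Y * Y)) => exists W0, sym_entourage W0 /\
   exists2 c : Y, N `<=` ent_at W0 c & (W `<=` W0 /\ forall a b, W0 (c, a) -> W0 (a, b) -> Q b).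
have Qm : forall N W W', QQ N W -> W' `<=` W -> QQ N W'.
  move=> N W W' [W0 [sW0 [c Nc [WW0 H]]]] W'W.
  by exists W0; split => //; exists c => //; split => //; apply: subset_trans WW0.
have Qi : forall N, LIn N s -> exists W, sym_entourage W /\ QQ N W.
  move=> N /Hs [_ [W [sW [c Nc H]]]].
  by exists W; split => //; exists W; split => //; exists c => //; split.
have [V [sV HV]] := sym_list Qm Qi.
exists V; split => // z [a Ka Vaz].
  have [N Ns Na] := cov a Ka.
  have [W0 [sW0 [c Nc [VW0 H]]]] := HV N Ns.
  by apply: (H a) => //; [exact: Nc | exact: VW0].
Qed.

Lemma closure_ent_at V W (y : Y) : sym_entourage W ->
  (forall a b c, W (a, b) -> W (b, c) -> V (a, c)) ->
  closure (ent_at W y) `<=` ent_at V y.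
Proof.
move=> sW H p /(_ _ (ent_at_nbhs p sW)) [q [Wyq Wpq]].
by apply: (H y q p) => //; apply: sW.2.
Qed.

End Unif.



Section MF.
Context {X : topologicalType} {Y : uniformType}.
Local Notation MF := (multifun X Y).
Implicit Types (V W : set (Y * Y)) (f g h : MF).

Definition dg V (x : X) f g :=
  (forall y, f x y -> exists2 w, g x w & V (y, w)) /\
  (forall z, g x z -> exists2 w, f x w & V (w, z)).

Definition DG V f g := forall x, dg V x f g.

Lemma dg_dagger_at V x f g : dg V x f g -> dagger_at V x f g.
Proof. by move=> [H1 H2] y z fy gz; split; [exact: H1|exact: H2]. Qed.

Lemma dagger_at_dg V x f g : f x !=set0 -> g x !=set0 ->
  dagger_at V x f g -> dg V x f g.
Proof.
move=> [y0 fy0] [z0 gz0] H; split.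
  by move=> y fy; have [] := H y z0 fy gz0.
by move=> z gz; have [] := H y0 z fy0 gz.
Qed.

Lemma dg_sym V x f g : sym_entourage V -> dg V x f g -> dg V x g f.
Proof.
move=> [_ sV] [H1 H2]; split.
  by move=> y /H2 [w fw Vwy]; exists w => //; apply: sV.
by move=> z /H1 [w gw Vzw]; exists w => //; apply: sV.
Qed.

Lemma dg_trans V1 V2 V3 x f g h : dg V1 x f g -> dg V2 x g h ->
  (forall a b c, V1 (a, b) -> V2 (b, c) -> V3 (a, c)) -> dg V3 x f h.
Proof.
move=> [A1 A2] [B1 B2] H; split.
  move=> y /A1 [w gw V1yw]; have [w' hw' V2ww'] := B1 w gw.
  by exists w' => //; exact: (H y w w').
move=> z /B2 [w gw V2wz]; have [w' fw' V1w'w] := A2 w gw.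
by exists w' => //; exact: (H w' w z).
Qed.

Lemma dg_mono V V' x f g : V `<=` V' -> dg V x f g -> dg V' x f g.
Proof.
move=> VV [H1 H2]; split.
  by move=> y /H1 [w ? ?]; exists w => //; apply: VV.
by move=> z /H2 [w ? ?]; exists w => //; apply: VV.
Qed.

Lemma dg_refl V x f : sym_entourage V -> dg V x f f.
Proof. by move=> sV; split=> y fy; exists y => //; exact: sym_refl. Qed.

Lemma dg_trans3 V W x f g h k : sym_entourage W ->
  (forall a b c d, W (a, b) -> W (b, c) -> W (c, d) -> V (a, d)) ->
  dg W x f g -> dg W x g h -> dg W x h k -> dg V x f k.
Proof.
move=> sW H d1 d2 d3.
have d12 := dg_trans d1 d2 (V3 := [set p | exists2 b, W (p.1, b) & W (b, p.2)])
  (fun a b c ab bc => ex_intro2 _ _ b ab bc).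
apply: dg_trans d12 d3 _.
by move=> a c d [b ab bc] cd; exact: (H a b c d).
Qed.

Lemma CXY_ne f x : CXY f -> f x !=set0.
Proof. by move=> [/(_ x) [] ]. Qed.

Lemma CXY_compact f x : CXY f -> compact (f x).
Proof. by move=> [/(_ x) [] ]. Qed.

Lemma dagger_DG V f g : CXY f -> CXY g -> dagger V (f, g) -> DG V f g.
Proof. by move=> cf cg H x; apply: dagger_at_dg; [exact: CXY_ne|exact: CXY_ne|exact: H]. Qed.

Lemma DG_dagger V f g : DG V f g -> dagger V (f, g).
Proof. by move=> H x; exact: dg_dagger_at. Qed.

Definition ucint (S : set MF) : set MF :=
  [set g | CXY g /\ exists V, sym_entourage V /\ forall h, CXY h -> DG V g h -> S h].

Lemma ucint_open S : uc_open (ucint S).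
Proof.
split; first by move=> g [].
move=> g [cg [V [sV HV]]].
have [W [sW HW]] := sym_split sV.
exists W; split => // h ch /(dagger_DG cg ch) gh; split => //.
exists W; split => // k ck hk; apply: HV => // x.
exact: dg_trans (gh x) (hk x) HW.
Qed.

Lemma ucint_sub S : ucint S `<=` S.
Proof. by move=> g [cg [V [sV HV]]]; apply: HV => // x; exact: dg_refl. Qed.

Lemma ball_ucint (P : MF -> Prop) V g : CXY g -> sym_entourage V -> P g ->
  ucint [set h | P g /\ DG V g h] g.
Proof. by move=> cg sV Pg; split => //; exists V; split. Qed.

Lemma uc_open_DG (Q : set MF) f : uc_open Q -> Q f ->
  exists V, sym_entourage V /\ forall h, CXY h -> DG V f h -> Q h.
Proof.
move=> [_ H] /H [V [sV HV]]; exists V; split => // h ch fh.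
by apply: HV => //; exact: DG_dagger.
Qed.

Lemma closure_CXY (F : set MF) g : uc_closure F g -> CXY g.
Proof. by case. Qed.

Lemma closure_approx (F : set MF) g V : uc_closure F g -> sym_entourage V ->
  exists2 f, F f & DG V g f.
Proof.
move=> [cg H] sV.
have [f [Hf Ff]] := H _ (ucint_open [set h | True /\ DG V g h])
   (ball_ucint (P := fun _ => True) cg sV I).
by exists f => //; have [] := ucint_sub Hf.
Qed.

Lemma sub_closure (F : set MF) : F `<=` @CXY X Y -> F `<=` uc_closure F.
Proof. by move=> FC f Ff; split; [exact: FC|move=> Q _ Qf; exists f]. Qed.

End MF.



Section SE.
Context {X : topologicalType} {Y : uniformType}.
Local Notation MF := (multifun X Y).

Lemma nbhs_open (x : X) (P : set X) : nbhs x P ->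
  exists U : set X, [/\ open U, U x & U `<=` P].
Proof. by rewrite nbhsE => -[B [oB Bx] BP]; exists B. Qed.

Lemma SE (g : MF) (W : set (Y * Y)) (x : X) : CXY g -> sym_entourage W ->
  \forall u \near x,
    (forall z, g u z -> exists2 a, g x a & W (a, z)) /\
    (forall y, g x y -> exists2 w, g u w & W (y, w)).
Proof.
move=> cg sW.
have n1 : \forall u \near x, forall z, g u z -> exists2 a, g x a & W (a, z).
  have [_ [usc _]] := cg.
  have [U [oU Ux HU]] := usc x _ (@open_interior _ (ent_img W (g x))) (ent_img_int sW).
  apply: filterS (open_nbhs_nbhs (conj oU Ux)) => u Uu z guz.
  have : ent_img W (g x) z by apply: interior_subset; apply: HU; exists u.
  by case=> a gxa Waz; exists a.
have [W' [sW' HW']] := sym_split sW.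
have [|s [Hs cov]] := @compact_covc Y (g x) (CXY_compact (x:=x) cg)
  (fun (N : set Y) => exists c, [/\ g x c, N c & N `<=` ent_at W' c]).
  move=> k gk; exists (interior (ent_at W' k)); split.
  - exact: open_interior.
  - exact: ent_at_int.
  - by exists k; split => //; [exact: ent_at_int|exact: interior_subset].
have n2 : \forall u \near x, forall N, LIn N s -> g u `&` N !=set0.
  apply: list_filterI => N /Hs [oN [c [gc Nc NW]]].
  have [_ [_ lsc]] := cg.
  have [U [oU Ux HU]] := lsc x N oN (ex_intro _ c (conj gc Nc)).
  exact: filterS (open_nbhs_nbhs (conj oU Ux)) => u /HU.
apply: filterS (filterI n1 n2) => u [h1 h2]; split => // y gy.
have [N Ns Ny] := cov y gy.
have [oN [c [gc Nc NW]]] := Hs N Ns.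
have [w [guw Nw]] := h2 N Ns.
exists w => //; apply: (HW' y c w); first by apply: sW'.2; exact: NW.
exact: NW.
Qed.

End SE.



Section Forward.
Context {X : topologicalType} {Y : uniformType}.
Local Notation MF := (multifun X Y).
Variable (F : set MF).
Hypothesis hF : F `<=` @CXY X Y.
Hypothesis hc : uc_compact (uc_closure F).
Local Notation cl := (uc_closure F).

Lemma net V : sym_entourage V -> exists s : seq MF,
  forall h, cl h -> exists g, [/\ LIn g s, cl g & DG V g h].
Proof.
move=> sV.
have [_ H] := hc.
have [|s Hs] := H MF (fun g => ucint [set h | cl g /\ DG V g h]) (fun g => ucint_open _) _.
  move=> h ch; exists h => //.
  exact: (ball_ucint (P := cl) (closure_CXY ch) sV ch).
exists s => h /Hs [g Lg /ucint_sub [cg gh]].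
by exists g.
Qed.

Lemma fwd_equi : equicontinuous_mf F.
Proof.
move=> x V sV.
have [W [sW HW]] := sym_split3 sV.
have [s Hs] := net sW.
have n : \forall u \near x, forall g, LIn g s -> cl g ->
    (forall z, g u z -> exists2 a, g x a & W (a, z)) /\
    (forall y, g x y -> exists2 w, g u w & W (y, w)).
  apply: list_filterI => g _.
  case: (pselect (cl g)) => [cg|ncg]; last by apply: filterS (filterT) => u _ /ncg.
  by apply: filterS (SE x (closure_CXY cg) sW) => u H _.
have [U [oU Ux HU]] := nbhs_open n.
exists U; split => // f Ff.
have [g [Lg cg gf]] := Hs f (sub_closure hF Ff).
split.
  move=> z [u Uu fuz].
  have [w guw Wwz] := (gf u).2 z fuz.
  have [a gxa Waw] := (HU u Uu g Lg cg).1 w guw.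
  have [b fxb Wab] := (gf x).1 a gxa.
  exists b => //; rewrite /ent_at /=.
  by apply: (HW b a w z) => //; apply: sW.2.
move=> u y Uu fxy.
have [a gxa Way] := (gf x).2 y fxy.
have [w guw Waw] := (HU u Uu g Lg cg).2 a gxa.
have [z fuz Wwz] := (gf u).1 w guw.
exists z; split => //; rewrite /ent_at /=.
by apply: (HW y a w z) => //; apply: sW.2.
Qed.


Lemma open_list_union (s : seq (set Y)) : (forall N, LIn N s -> open N) ->
  open [set y | exists2 N, LIn N s & N y].
Proof.
move=> Hs; rewrite openE => y [N Ns Ny]; rewrite /interior.
by apply: filterS (open_nbhs_nbhs (conj (Hs N Ns) Ny)) => z Nz; exists N.
Qed.

Lemma fwd_pw (hY : hausdorff_space Y) : pointwise_rel_compact F.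
Proof.
move=> x.
pose C := \bigcup_(g in cl) g x.
have cC : compact C.
  apply: covc_compact => P HP.
  pose good (g : MF) (V : set (Y * Y)) (s : seq (set Y)) :=
    [/\ cl g, sym_entourage V, (forall N, LIn N s -> open N /\ P N) &
        ent_img V (g x) `<=` [set y | exists2 N, LIn N s & N y]].
  have [_ H] := hc.
  have [|L HL] := H (MF * set (Y * Y) * seq (set Y))%type
     (fun i => ucint [set h | good i.1.1 i.1.2 i.2 /\ DG i.1.2 i.1.1 h])
     (fun i => ucint_open _).
    move=> h ch.
    have [|s [Hs cov]] := @compact_covc Y (h x) (CXY_compact (x := x) (closure_CXY ch)) P.
      move=> k hk; apply: HP; by exists h.
    have [V [sV HV]] := @compact_ent Y (h x) _ (CXY_compact (x := x) (closure_CXY ch))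
      (open_list_union (fun N Ns => (Hs N Ns).1)) (fun k hk => cov k hk).
    exists (h, V, s) => //.
    exact: (ball_ucint (P := fun g => good g V s) (closure_CXY ch) sV).
  exists (List.flat_map (fun i => if pselect (good i.1.1 i.1.2 i.2) then i.2 else [::]) L).
  split.
    move=> N /List.in_flat_map [i [Li]].
    by case: pselect => // -[_ _ Hs _] /Hs.
  move=> k [h ch hk].
  have [i Li /ucint_sub [gi hi]] := HL h ch.
  have [w gw Vwk] := (hi x).2 k hk.
  have [_ _ _ Hsub] := gi.
  have [N Ns Nk] : exists2 N, LIn N i.2 & N k by apply: Hsub; exists w.
  exists N => //; apply/List.in_flat_map; exists i; split => //.
  by case: pselect.
have clC : closed C by exact: compact_closed.
apply: (subclosed_compact _ cC); first exact: closed_closure.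
rewrite (closure_id C).1 //; apply: closureS => y [f Ff fy].
by exists f => //; exact: sub_closure.
Qed.

Lemma sub3 (V W : set (Y * Y)) : sym_entourage W ->
  (forall a b c d, W (a, b) -> W (b, c) -> W (c, d) -> V (a, d)) -> W `<=` V.
Proof.
by move=> sW H [a b] Wab; apply: (H a b b b) => //; exact: sym_refl.
Qed.

Lemma pairs_lemma (W W1 : set (Y * Y)) (ps : seq (MF * MF)) : sym_entourage W ->
  exists s : seq (X * set (Y * Y)), (forall p, LIn p s -> sym_entourage p.2) /\
  forall q, LIn q ps -> DG W1 q.1 q.2 \/ exists x0, LIn (x0, W) s /\ ~ dg W1 x0 q.1 q.2.
Proof.
move=> sW; elim: ps => [|q ps [s [Hs Hq]]].
  by exists [::]; split => // p [].
case: (pselect (DG W1 q.1 q.2)) => [d|nd].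
  exists s; split => // q' [<-|/Hq //]; by left.
move: nd => /existsNP [x0 nx0].
exists ((x0, W) :: s); split.
  by move=> p [<-|/Hs].
move=> q' [<-|/Hq [|[x1 [L1 n1]]]]; [right; exists x0; split => //; by left|by left|].
by right; exists x1; split => //; right.
Qed.

Lemma fwd_fe : finite_extension F.
Proof.
move=> V sV.
have [W1 [sW1 HW1]] := sym_split3 sV.
have [W [sW HW]] := sym_split3 sW1.
have [L HL] := net sW.
have [s [Hs Hq]] := pairs_lemma W1 (List.list_prod L L) sW.
exists s; split => // f g Ff Fg Hd.
have [gi [Li ci gif]] := HL f (sub_closure hF Ff).
have [gj [Lj cj gjg]] := HL g (sub_closure hF Fg).
have WW1 := sub3 sW HW.
case: (Hq (gi, gj) (List.in_prod _ _ _ _ Li Lj)) => [d|[x0 [Lx0 nx0]]].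
  apply: DG_dagger => x.
  apply: (dg_trans3 sW1 HW1 (g := gi) (h := gj)).
  - exact: dg_mono WW1 (dg_sym sW (gif x)).
  - exact: d.
  - exact: dg_mono WW1 (gjg x).
exfalso; apply: nx0.
have dfg : dg W x0 f g.
  apply: dagger_at_dg; [exact: CXY_ne (hF Ff)|exact: CXY_ne (hF Fg)|].
  exact: (Hd (x0, W) Lx0).
exact: (dg_trans3 sW HW (gif x0) dfg (dg_sym sW (gjg x0))).
Qed.

End Forward.



Lemma filter_list_ex (T : Type) (G : set_system T) (I : Type) (s : seq I)
  (R : I -> set T -> Prop) : Filter G ->
  (forall i A A', R i A -> A' `<=` A -> R i A') ->
  (forall i, LIn i s -> exists A, G A /\ R i A) ->
  exists A, G A /\ forall i, LIn i s -> R i A.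
Proof.
move=> FG Rm; elim: s => [|a s IH] H.
  by exists setT; split => //; exact: filterT.
have [A1 [G1 R1]] := H a (or_introl erefl).
have [A2 [G2 R2]] := IH (fun i Hi => H i (or_intror Hi)).
exists (A1 `&` A2); split; first exact: filterI.
move=> i [<-|Hi].
  by apply: Rm R1 _ => ? [].
by apply: Rm (R2 i Hi) _ => ? [].
Qed.

Lemma ultra_list (T : Type) (G : set_system T) (I : Type) (s : seq I)
  (E : I -> set T) : UltraFilter G ->
  exists A, G A /\ forall i, LIn i s -> A `<=` E i \/ A `<=` ~` E i.
Proof.
move=> UG; apply: filter_list_ex.
- by move=> i A A' [H|H] sub; [left|right]; apply: subset_trans H.
- move=> i _; case: (in_ultra_setVsetC (E i) UG) => H.
    by exists (E i); split => //; left.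
  by exists (~` E i); split => //; right.
Qed.

Section Reverse.
Context {X : topologicalType} {Y : uniformType}.
Local Notation MF := (multifun X Y).
Variable (F : set MF).
Hypothesis hF : F `<=` @CXY X Y.
Hypothesis pw : pointwise_rel_compact F.
Hypothesis fe : finite_extension F.
Local Notation cl := (uc_closure F).
Local Notation K x := (closure (\bigcup_(f in F) f x)).

Lemma cl_K g x : cl g -> g x `<=` K x.
Proof.
move=> cg y gy N /nbhs_sym [V [sV VN]].
have [f Ff gf] := closure_approx cg sV.
have [w fw Vyw] := (gf x).1 y gy.
by exists w; split; [exists f|apply: VN].
Qed.

Lemma fe_cl V : sym_entourage V -> exists s : seq (X * set (Y * Y)),
  (forall p, LIn p s -> sym_entourage p.2) /\
  forall g g', cl g -> cl g' -> (forall p, LIn p s -> dg p.2 p.1 g g') -> DG V g g'.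
Proof.
move=> sV.
have [V1 [sV1 HV1]] := sym_split3 sV.
have [s0 [Hs0 P0]] := fe sV1.
have [A0 [sA0 HA0]] := sym_list (s := s0)
  (Q := fun p W => forall a b c d, W (a, b) -> W (b, c) -> W (c, d) -> p.2 (a, d))
  (fun p W W' H sub a b c d ab bc cd => H a b c d (sub _ ab) (sub _ bc) (sub _ cd))
  (fun p Hp => sym_split3 (Hs0 p Hp)).
pose A := A0 `&` V1.
have sA : sym_entourage A by exact: symI.
exists (map (fun p => (p.1, A)) s0); split.
  by move=> p /List.in_map_iff [q [<- _]].
move=> g g' cg cg' H.
have [f Ff gf] := closure_approx cg sA.
have [f' Ff' gf'] := closure_approx cg' sA.
have dff : DG V1 f f'.
  apply: dagger_DG; [exact: hF|exact: hF|].
  apply: P0 => // p Hp; apply: dg_dagger_at.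
  have dgg : dg A p.1 g g' by apply: (H (p.1, A)); apply/List.in_map_iff; exists p.
  apply: (dg_trans3 sA _ (dg_sym sA (gf p.1)) dgg (gf' p.1)).
  by move=> a b c d ab bc cd; apply: (HA0 p Hp a b c d); [case: ab|case: bc|case: cd].
move=> x.
have AV1 : A `<=` V1 by move=> ? [].
apply: (dg_trans3 sV1 HV1 (dg_mono AV1 (gf x)) (dff x)).
exact: dg_mono AV1 (dg_sym sA (gf' x)).
Qed.

Section Ultra.
Variable UU : set_system MF.
Hypothesis UUu : UltraFilter UU.
Hypothesis UUcl : UU cl.

Lemma pw_cauchy x W : sym_entourage W -> exists A, UU A /\
  forall g g', A g -> A g' -> cl g -> cl g' -> dg W x g g'.
Proof.
move=> sW.
have [W' [sW' HW']] := sym_split sW.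
have [|s [Hs cov]] := @compact_covc Y (K x) (@pw x)
  (fun (N : set Y) => exists c : Y, N `<=` ent_at W' c).
  move=> k Kk; exists (interior (ent_at W' k)); split.
  - exact: open_interior.
  - exact: ent_at_int.
  - by exists k; exact: interior_subset.
have [A [UA HA]] := ultra_list s (fun N => [set g : MF | g x `&` N !=set0]) UUu.
have half : forall g g', A g -> A g' -> cl g -> cl g' ->
    forall y, g x y -> exists2 w, g' x w & W (y, w).
  move=> g g' Ag Ag' cg cg' y gy.
  have [N Ns Ny] := cov y (cl_K cg gy).
  have [_ [c Nc]] := Hs N Ns.
  case: (HA N Ns) => [AE|AE]; last by exfalso; apply: (AE g Ag); exists y.
  have [w [g'w Nw]] := AE g' Ag'.
  exists w => //; apply: (HW' y c w); first by apply: sW'.2; exact: Nc.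
  exact: Nc.
exists A; split => // g g' Ag Ag' cg cg'; split.
  exact: half.
move=> z g'z; have [w gw Wzw] := half g' g Ag' Ag cg' cg z g'z.
by exists w => //; apply: sW.2.
Qed.

Lemma cauchy V : sym_entourage V -> exists A, UU A /\
  forall g g', A g -> A g' -> cl g -> cl g' -> DG V g g'.
Proof.
move=> sV.
have [s [Hs Hd]] := fe_cl sV.
have [A [UA HA]] := filter_list_ex (s := s)
  (R := fun p A => forall g g', A g -> A g' -> cl g -> cl g' -> dg p.2 p.1 g g')
  _ (fun p A A' H sub g g' Ag Ag' => H g g' (sub _ Ag) (sub _ Ag'))
  (fun p Hp => pw_cauchy p.1 (Hs p Hp)).
exists A; split => // g g' Ag Ag' cg cg'.
by apply: Hd => // p Hp; exact: HA.
Qed.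


Definition phi : MF := fun x =>
  [set y | forall A, UU A -> closure (\bigcup_(g in A `&` cl) g x) y].

Lemma closed_phi x : closed (phi x).
Proof.
rewrite (closure_id (phi x)); last first.
apply/seteqP; split; first exact: subset_closure.
move=> y cy A UA.
have : closed (closure (\bigcup_(g in A `&` cl) g x)) by exact: closed_closure.
rewrite closure_id => ->.
by apply: closureS cy => z /(_ A UA).
Qed.

Lemma lim_pt x (B : set MF) (P : set Y) : UU B ->
  (forall g, B g -> cl g -> g x `&` P !=set0) ->
  exists p, phi x p /\ closure P p.
Proof.
move=> UB HB.
pose T := fun A : set MF => closure (\bigcup_(g in A `&` B `&` cl) (g x `&` P)).
have PU : ProperFilter UU by case: UUu.
have FG : Filter (filter_from UU T).
  apply: filter_from_filter; first by exists setT; exact: filterT.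
  move=> A1 A2 U1 U2; exists (A1 `&` A2); first exact: filterI.
  by move=> y Ty; split; apply: closureS Ty => z [g [[[? ?] ?] ?] gz]; exists g.
have PG : ProperFilter (filter_from UU T).
  apply: filter_from_proper => // A UA.
  have : UU (A `&` B `&` cl) by apply: filterI => //; exact: filterI.
  move=> /filter_ex [g [[Ag Bg] cg]].
  have [y Py] := HB g Bg cg.
  by exists y; apply: subset_closure; exists g.
have [|p [Kp clp]] := @pw x _ PG.
  exists setT; first exact: filterT.
  move=> y Ty.
  have : closed (K x) by exact: closed_closure.
  rewrite closure_id => ->.
  apply: closureS Ty => z [g [[_ _] cg] [gz _]].
  exact (@cl_K g x cg z gz).
have TA : forall A, UU A -> T A p.
  move=> A UA.
  have : closed (T A) by exact: closed_closure.
  rewrite closure_id => ->.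
  move=> N Np.
  have TG : filter_from UU T (T A) by exists A.
  have [y [Ty Ny]] := clp (T A) N TG Np.
  by exists y.
exists p; split.
  move=> A UA; apply: closureS (TA A UA) => z [g [[Ag _] cg] [gz _]].
  by exists g.
by apply: closureS (TA setT filterT) => z [g _ [_ Pz]].
Qed.

Lemma phi_sub x : phi x `<=` K x.
Proof.
move=> y /(_ cl UUcl).
have : closed (K x) by exact: closed_closure.
rewrite closure_id => ->.
apply: closureS => z [g [_ cg] gz].
exact (@cl_K g x cg z gz).
Qed.

Lemma conv V : sym_entourage V -> exists A, UU A /\
  forall g, A g -> cl g -> DG V g phi.
Proof.
move=> sV.
have [V' [sV' HV']] := sym_split3 sV.
have HV2 : forall a b c, V' (a, b) -> V' (b, c) -> V (a, c).
  by move=> a b c ab bc; apply: (HV' a b c c) => //; exact: sym_refl.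
have [A [UA HA]] := cauchy sV'.
exists A; split => // g Ag cg x; split.
  move=> y gy.
  have [|p [php clp]] := lim_pt (x := x) (P := ent_at V' y) UA.
    move=> g' Ag' cg'.
    have [w g'w Vyw] := (HA g g' Ag Ag' cg cg' x).1 y gy.
    by exists w.
  by exists p => //; apply: (closure_ent_at sV' HV2).
move=> z /(_ A UA) /(_ _ (ent_at_nbhs z sV')) [q [[g' [Ag' cg'] g'q] Vzq]].
have [w gw Vwq] := (HA g g' Ag Ag' cg cg' x).2 q g'q.
by exists w => //; apply: (HV2 w q z) => //; apply: sV'.2.
Qed.

Lemma pick_g A : UU A -> exists g, A g /\ cl g.
Proof.
move=> UA; have PU : ProperFilter UU by case: UUu.
have /filter_ex [g [Ag cg]] : UU (A `&` cl) by exact: filterI.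
by exists g.
Qed.

Lemma phi_CXY : CXY phi.
Proof.
have phi_ne : forall x, phi x !=set0.
  move=> x; have [|p [php _]] := lim_pt (x := x) (P := setT) UUcl.
    move=> g _ cg; have [y gy] := CXY_ne x (closure_CXY cg); by exists y.
  by exists p.
have phi_cpt : forall x, compact (phi x).
  move=> x; exact (subclosed_compact (@closed_phi x) (@pw x) (@phi_sub x)).
split; first by move=> x; split.
split.
  move=> x W oW sub.
  have [V [sV HV]] := compact_ent (phi_cpt x) oW sub.
  have [V' [sV' HV']] := sym_split3 sV.
  have [A [UA HA]] := conv sV'.
  have [g [Ag cg]] := pick_g UA.
  have cgx := closure_CXY cg.
  have [_ [usc _]] := cgx.
  have [U [oU Ux HU]] := usc x _ (@open_interior _ (ent_img V' (g x))) (ent_img_int sV').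
  exists U; split => // z [u Uu phz].
  have [w guw Vwz] := (HA g Ag cg u).2 z phz.
  have : ent_img V' (g x) w by apply: interior_subset; apply: HU; exists u.
  case=> a gxa Vaw.
  have [b phb Vab] := (HA g Ag cg x).1 a gxa.
  apply: HV; exists b => //; rewrite /ent_at /=.
  by apply: (HV' b a w z) => //; apply: sV'.2.
move=> x W oW [z [phz Wz]].
have nW : nbhs z W by apply: open_nbhs_nbhs; split.
have [V [sV VW]] := nbhs_sym nW.
have [V' [sV' HV']] := sym_split3 sV.
have [A [UA HA]] := conv sV'.
have [g [Ag cg]] := pick_g UA.
have [_ [_ lsc]] := closure_CXY cg.
have [y gy Vyz] := (HA g Ag cg x).2 z phz.
have [U [oU Ux HU]] := lsc x _ (@open_interior _ (ent_at V' y))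
   (ex_intro _ y (conj gy (ent_at_int y sV'))).
exists U; split => // u Uu.
have [w [guw iw]] := HU u Uu.
have Vyw : V' (y, w) by exact: interior_subset iw.
have [w' phw' Vww'] := (HA g Ag cg u).1 w guw.
exists w'; split => //; apply: VW; rewrite /ent_at /=.
by apply: (HV' z y w w') => //; apply: sV'.2.
Qed.

Lemma phi_cl : cl phi.
Proof.
split; first exact: phi_CXY.
move=> Q oQ Qphi.
have [V [sV HV]] := uc_open_DG oQ Qphi.
have [A [UA HA]] := conv sV.
have [g [Ag cg]] := pick_g UA.
have Qg : Q g by apply: HV; [exact: (closure_CXY cg)|move=> x; exact: dg_sym (HA g Ag cg x)].
by have [_ H] := cg; exact: H.
Qed.

Lemma UU_open (Q : set MF) : uc_open Q -> Q phi -> UU Q.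
Proof.
move=> oQ Qphi.
have [V [sV HV]] := uc_open_DG oQ Qphi.
have [A [UA HA]] := conv sV.
have : UU (A `&` cl) by exact: filterI.
apply: filterS => g [Ag cg].
by apply: HV; [exact: (closure_CXY cg)|move=> x; exact: dg_sym (HA g Ag cg x)].
Qed.

End Ultra.


Lemma rev_compact : uc_compact cl.
Proof.
split; first by move=> g /closure_CXY.
move=> I Q oQ cov.
apply: contrapT => Hno.
pose B := fun s : seq I => cl `\` \bigcup_(i in [set i | LIn i s]) Q i.
have FG : Filter (filter_from setT B).
  apply: filter_from_filter; first by exists [::].
  move=> i j _ _; exists (i ++ j) => //.
  move=> g [cg ng]; split; split => //; case=> k Lk Qk; apply: ng; exists k => //;
    rewrite /= ; apply: Stdlib.Lists.List.in_or_app; tauto.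
have PG : ProperFilter (filter_from setT B).
  apply: filter_from_proper => // s _.
  apply: contrapT => /set0P/negP; rewrite negbK => /eqP B0.
  apply: Hno; exists s => g cg; apply: contrapT => ng.
  have : B s g by split.
  by rewrite B0.
have [UU [UUu sub]] := ultraFilterLemma PG.
have UUcl : UU cl by apply: sub; exists [::] => // g [].
have [i _ Qi] := cov _ (phi_cl UUu UUcl).
have UQ := UU_open UUu UUcl (oQ i) Qi.
have UB : UU (B [:: i]) by apply: sub; exists [:: i].
have PU : ProperFilter UU by case: UUu.
have /filter_ex [g [Qg [_ ng]]] : UU (Q i `&` B [:: i]) by exact: filterI.
by apply: ng; exists i => //; left.
Qed.

End Reverse.


Theorem theorem3p2 (X : topologicalType) (Y : uniformType)
  (hX : locally_compact [set: X]) (hY : hausdorff_space Y)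
  (F : set (multifun X Y)) (hF : F `<=` CXY (X:=X) (Y:=Y)) :
  rel_uc_compact F <->
  ((pointwise_rel_compact F /\ equicontinuous_mf F) /\ finite_extension F).
Proof.
split.
  move=> hc; split; [split|].
  - exact: fwd_pw hF hc hY.
  - exact: fwd_equi hF hc.
  - exact: fwd_fe hF hc.
move=> [[pw _] fe].
exact: rev_compact hF pw fe.
Qed.
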